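(* Let $\overline{G}_n=\overline{H}_0\overline{H}_1\cdots\overline{H}_{n-1}$ be a polyphenyl hexagonal chain with $n$ hexagons and $G_n=H_0H_1\cdots H_{n-1}$ its hexagonal squeeze. Then $$25\,W(\overline{G}_n)=36\,W(G_n)+150n^3-270n^2-177n.$$
   Context: The Wiener index is $W(G)=\sum_{\{u,v\}\subseteq V(G)}d_G(u,v)$, $d_G$ the shortest-path distance. A polyphenyl hexagonal chain $\overline{G}_n=\overline{H}_0\cdots\overline{H}_{n-1}$ of length $n$ consists of pairwise vertex-disjoint hexagons (6-cycles) $\overline{H}_0,\dots,\overline{H}_{n-1}$ together with cut-edges: $\overline{G}_1=\overline{H}_0$, and for $k\ge1$, $\overline{G}_{k+1}$ is obtained from $\overline{G}_k$ by adding $\overline{H}_k$ and a cut-edge joining a vertex $c_k$ of $\overline{H}_k$ to a vertex $t_k$ of $\overline{H}_{k-1}$, where for $k\ge2$, $t_k\ne c_{k-1}$. The hexagonal squeeze of $\overline{G}_n$ is the graph $G_n$ obtained by contracting every cut-edge $c_kt_k$ into a single vertex; it is a spiro hexagonal chain, i.e. a connected graph whose blocks are $n$ hexagons $H_0,\dots,H_{n-1}$, consecutive hexagons $H_{k-1},H_k$ sharing one cut-vertex, each cut-vertex shared by exactly two hexagons and each hexagon having at most two cut-vertices. *)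

(* Defs.v *)
From mathcomp Require Import all_boot all_order all_algebra.
Set Implicit Arguments. Unset Strict Implicit. Unset Printing Implicit Defensive.

Fixpoint ball (T : finType) (e : rel T) (k : nat) (u : T) : {set T} :=
  if k is k'.+1 then
    ball e k' u :|: [set y | [exists x in ball e k' u, e x y]]
  else [set u].

(* shortest-path distance: least k such that v is within k steps of u
   (search over k < #|T|, which suffices for connected graphs). *)
Definition dist (T : finType) (e : rel T) (u v : T) : nat :=
  find (fun k => v \in ball e k u) (iota 0 #|T|).

Definition wiener (T : finType) (e : rel T) : nat :=
  \sum_(u : T) \sum_(v : T | enum_rank u < enum_rank v) dist e u v.

(* vertex (k, i): vertex i (cyclic labelling 0..5) of hexagon H_k *)
Definition pvert (n : nat) := ('I_n * 'I_6)%type.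

Definition hexadj (i j : 'I_6) : bool :=
  (val j == (val i).+1 %% 6) || (val i == (val j).+1 %% 6).

Definition hex_edge (n : nat) (x y : pvert n) : bool :=
  (val x.1 == val y.1) && hexadj x.2 y.2.

(* cut-edge c_k t_k : x = (k, c k) in H_k, y = (k-1, t k) in H_{k-1}, k >= 1 *)
Definition cut_edge (n : nat) (c t : nat -> 'I_6) (x y : pvert n) : bool :=
  [&& 0 < val x.1, val y.1 == (val x.1).-1, x.2 == c (val x.1) & y.2 == t (val x.1)].

Definition pp_edge (n : nat) (c t : nat -> 'I_6) : rel (pvert n) :=
  fun x y => [|| hex_edge x y, cut_edge c t x y | cut_edge c t y x].

(* representatives of the classes of the contraction: (k, c k) with k >= 1
   is identified with (k-1, t k); we keep the latter *)
Definition rep (n : nat) (c : nat -> 'I_6) (x : pvert n) : bool :=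
  (val x.1 == 0) || (x.2 != c (val x.1)).

Definition pred_ord (n : nat) (k : 'I_n) : 'I_n :=
  Ordinal (leq_ltn_trans (leq_pred k) (ltn_ord k)).

Definition rmap (n : nat) (c t : nat -> 'I_6) (x : pvert n) : pvert n :=
  if rep c x then x else (pred_ord x.1, t (val x.1)).

Definition sq_vert (n : nat) (c : nat -> 'I_6) := {x : pvert n | rep c x}.

Definition sq_edge (n : nat) (c t : nat -> 'I_6) : rel (sq_vert n c) :=
  fun x y => [exists a : pvert n, exists b : pvert n,
    [&& hex_edge a b, rmap c t a == val x & rmap c t b == val y]].

(* Main.v *)
Require Import Defs.
From mathcomp Require Import all_boot all_order all_algebra.
Import GRing.Theory Num.Theory.
From mathcomp Require Import zify.
Set Implicit Arguments. Unset Strict Implicit. Unset Printing Implicit Defensive.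
Definition hd (a b : nat) : nat :=
  let d := if a <= b then b - a else a - b in minn d (6 - d).
Definition hexadjn (a b : nat) : bool := (b == a.+1 %% 6) || (a == b.+1 %% 6).

Lemma fin6 (P : pred nat) : all P (iota 0 6) -> forall x, x < 6 -> P x.
Proof. by move=> /allP H x Hx; apply: H; rewrite mem_iota. Qed.

Lemma hd_sym a b : hd a b = hd b a.
Proof. rewrite /hd; case: (leqP a b) => H1; case: (leqP b a) => H2 //; lia. Qed.
Lemma hd_aa a : hd a a = 0.
Proof. by rewrite /hd leqnn subnn. Qed.



Lemma hd_fin_all : all (fun x => all (fun a => all (fun b =>
   [&& (hd a b == 0) == (a == b), hd a b <= 3 & hexadjn a b ==> (hd x b <= (hd x a).+1)])
   (iota 0 6)) (iota 0 6)) (iota 0 6).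
Proof. by vm_compute. Qed.

Lemma hd_fin x a b : x < 6 -> a < 6 -> b < 6 ->
  [/\ (hd a b == 0) = (a == b), hd a b <= 3 & hexadjn a b -> hd x b <= (hd x a).+1].
Proof.
move=> Hx Ha Hb.
have := fin6 hd_fin_all Hx => H1.
have := fin6 H1 Ha => H2.
by case/and3P: (fin6 H2 Hb) => /eqP H3 H4 /implyP H5; split.
Qed.

Lemma hd_step_all : all (fun x => all (fun b =>
   (0 < hd x b) ==> has (fun b' => hexadjn b' b && ((hd x b').+1 == hd x b)) (iota 0 6))
   (iota 0 6)) (iota 0 6).
Proof. by vm_compute. Qed.

Lemma hd_step x b : x < 6 -> b < 6 -> 0 < hd x b ->
  exists2 b', b' < 6 & hexadjn b' b && ((hd x b').+1 == hd x b).
Proof.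
move=> Hx Hb H0.
have := fin6 hd_step_all Hx => H1.
have /implyP /(_ H0) /hasP [b' Hb' Hh] := fin6 H1 Hb.
by exists b' => //; move: Hb'; rewrite mem_iota.
Qed.

Lemma hd_sums_all : all (fun x => all (fun y =>
  [&& \sum_(0 <= a < 6) hd a x == 9,
      (\sum_(0 <= a < 6 | a != x) hd a y) + hd x y == 9,
      \sum_(0 <= a < 6 | a != x) \sum_(0 <= b < 6 | b != x) hd a b == 36 &
      \sum_(0 <= a < 6 | a != x) 1 == 5]) (iota 0 6)) (iota 0 6).
Proof. rewrite unlock; by vm_compute. Qed.

Lemma hd_sums x y : x < 6 -> y < 6 ->
  [/\ \sum_(0 <= a < 6) hd a x = 9,
      (\sum_(0 <= a < 6 | a != x) hd a y) + hd x y = 9,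
      \sum_(0 <= a < 6 | a != x) \sum_(0 <= b < 6 | b != x) hd a b = 36 &
      \sum_(0 <= a < 6 | a != x) 1 = 5].
Proof.
move=> Hx Hy.
have := fin6 hd_sums_all Hx => H1.
by have /and4P[/eqP -> /eqP -> /eqP -> /eqP ->] := fin6 H1 Hy.
Qed.

Lemma hd_sum54 : \sum_(0 <= a < 6) \sum_(0 <= b < 6) hd a b = 54.
Proof. rewrite unlock; by vm_compute. Qed.

Definition ell (c t : nat -> 'I_6) m := hd (c m) (t m.+1).
Definition Lsum (c t : nat -> 'I_6) j k := \sum_(j.+1 <= m < k) ell c t m.
Definition Fe (c t : nat -> 'I_6) (e j a k b : nat) : nat :=
  if j == k then hd a b
  else if j < k then hd a (t j.+1) + Lsum c t j k + hd (c k) b + e * (k - j)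
  else hd b (t k.+1) + Lsum c t k j + hd (c j) a + e * (j - k).

Lemma Fe_sym c t e j a k b : Fe c t e j a k b = Fe c t e k b j a.
Proof.
rewrite /Fe eq_sym; case: (k =P j) => [_|Hn]; first exact: hd_sym.
by case: (ltngtP j k) => H //; case: Hn.
Qed.

Lemma Lsum_nil c t j : Lsum c t j j.+1 = 0.
Proof. by rewrite /Lsum big_geq. Qed.
Lemma Lsum_r c t j k : j < k -> Lsum c t j k.+1 = Lsum c t j k + ell c t k.
Proof. by move=> H; rewrite /Lsum big_nat_recr. Qed.
Lemma Lsum_l c t j k : j.+1 < k -> Lsum c t j k = ell c t j.+1 + Lsum c t j.+1 k.
Proof. by move=> H; rewrite /Lsum big_ltn. Qed.
Lemma Lsum_le c t j k : Lsum c t j k <= 3 * (k - j.+1).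
Proof.
have H m : ell c t m <= 3 by have [] := hd_fin (ltn_ord (c m)) (ltn_ord (c m)) (ltn_ord (t m.+1)).
rewrite /Lsum. apply: leq_trans; first by apply: leq_sum => m _; exact: H.
by rewrite sum_nat_const_nat mulnC.
Qed.

Lemma cutF1 c t e j a k : j <= k ->
  Fe c t e j a k.+1 (c k.+1) = Fe c t e j a k (t k.+1) + e.
Proof.
move=> H. rewrite /Fe ltnS H (ltn_eqF (leq_ltn_trans H (ltnSn k))) hd_aa.
case: (j =P k) => [->|Hn]; first by rewrite Lsum_nil; lia.
have Hjk : j < k by rewrite ltn_neqAle H andbT; apply/eqP.
rewrite Hjk Lsum_r // /ell. lia.
Qed.

Lemma cutF2 c t e j a k : k < j ->
  Fe c t e j a k (t k.+1) = Fe c t e j a k.+1 (c k.+1) + e.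
Proof.
move=> H. rewrite /Fe (gtn_eqF H) (ltnNge j k) (ltnW H) /= hd_aa.
case: (j =P k.+1) => [->|Hn]; first by rewrite Lsum_nil hd_sym; lia.
have Hjk : k.+1 < j by rewrite ltn_neqAle H andbT; apply/eqP => E; apply: Hn.
rewrite ltnNge (ltnW Hjk) /= (Lsum_l c t Hjk) /ell. lia.
Qed.

Lemma Fe_lip c t e j a k b b' : a < 6 -> b < 6 -> b' < 6 -> hexadjn b b' ->
  Fe c t e j a k b' <= (Fe c t e j a k b).+1.
Proof.
move=> Ha Hb Hb' Hadj. rewrite /Fe.
case: (j == k); first by have [_ _ ->] := hd_fin Ha Hb Hb'.
case: (j < k).
  have [_ _ H] := hd_fin (ltn_ord (c k)) Hb Hb'; have := H Hadj; lia.
rewrite (hd_sym b) (hd_sym b').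
have [_ _ H] := hd_fin (ltn_ord (t k.+1)) Hb Hb'; have := H Hadj; lia.
Qed.

Lemma Fe_bound c t e n j a k b : j < n -> k < n -> a < 6 -> b < 6 ->
  Fe c t e j a k b <= 3 + (3 + e) * n.-1.
Proof.
move=> Hj Hk Ha Hb. rewrite /Fe.
case: (j =P k) => [_|Hne]; first by have [_ H _] := hd_fin Ha Ha Hb; apply: leq_trans H _; exact: leq_addr.
case: ltnP => H.
  have [_ H1 _] := hd_fin Ha Ha (ltn_ord (t j.+1)).
  have [_ H2 _] := hd_fin Ha (ltn_ord (c k)) Hb.
  have H3 := Lsum_le c t j k.
  have H4 : e * (k - j) <= e * n.-1 by apply: leq_mul => //; lia.
  have : 3 * (k - j.+1).+1 <= 3 * n.-1 by apply: leq_mul => //; lia.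
  rewrite mulnDl; lia.
have [_ H1 _] := hd_fin Ha Hb (ltn_ord (t k.+1)).
have [_ H2 _] := hd_fin Ha (ltn_ord (c j)) Ha.
have H3 := Lsum_le c t k j.
have Hkj : k < j by rewrite ltn_neqAle H andbT; apply/eqP => E; apply: Hne.
have H4 : e * (j - k) <= e * n.-1 by apply: leq_mul => //; lia.
have : 3 * (j - k.+1).+1 <= 3 * n.-1 by apply: leq_mul => //; lia.
rewrite mulnDl; lia.
Qed.
Lemma find_leq (a N : nat) : a < N -> find (fun k => a <= k) (iota 0 N) = a.
Proof.
move=> H. rewrite -(subnKC (ltnW H)) iotaD find_cat.
have -> : has (fun k => a <= k) (iota 0 a) = false.
  apply/hasP => -[k]; rewrite mem_iota add0n => /andP[_ Hk] Hak; lia.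
rewrite size_iota add0n.
case E: (N - a) => [|m]; first lia.
by rewrite /= leqnn addn0.
Qed.

Lemma dist_char (T : finType) (e : rel T) (u : T) (f : T -> nat) :
  (forall v, (f v == 0) = (v == u)) ->
  (forall x y, e x y -> f y <= (f x).+1) ->
  (forall v, 0 < f v -> exists2 x, e x v & (f x).+1 = f v) ->
  (forall v, f v < #|T|) -> forall v, dist e u v = f v.
Proof.
move=> H0 Hl Hp Hb.
have Hsub : forall k v, v \in ball e k u -> f v <= k.
  elim=> [|k IH] v /=.
    by rewrite in_set1 => /eqP ->; have := H0 u; rewrite eqxx => /eqP ->.
  case/setUP; first by move/IH => H; lia.
  rewrite inE => /existsP [x /andP[/IH Hx /Hl Hxv]]; lia.
have Hin : forall k v, f v <= k -> v \in ball e k u.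
  elim=> [|k IH] v /=.
    by rewrite leqn0 H0 in_set1.
  rewrite leq_eqVlt ltnS => /orP[/eqP Hv|/IH Hv]; last by rewrite inE Hv.
  have [x Hxv Hfx] := Hp v (ltac:(lia)).
  apply/setUP; right; rewrite inE; apply/existsP; exists x.
  by rewrite Hxv andbT; apply: IH; lia.
move=> v; rewrite /dist.
rewrite (@eq_find _ _ (fun k => f v <= k)); first exact: find_leq.
move=> k; apply/idP/idP; [exact: Hsub | exact: Hin].
Qed.
Lemma wiener2 (T : finType) (e : rel T) :
 (forall u v, dist e u v = dist e v u) -> (forall u, dist e u u = 0) ->
 2 * wiener e = \sum_u \sum_v dist e u v.
Proof.
move=> Hs H0.
have Hu : forall u, \sum_v dist e u v =
   \sum_(v | enum_rank u < enum_rank v) dist e u v + \sum_(v | enum_rank v < enum_rank u) dist e u v.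
  move=> u. rewrite [in RHS]big_mkcond [X in _ + X]big_mkcond -big_split.
  apply: eq_bigr => v _; case: ltngtP => Hr; rewrite /= ?addn0 ?add0n //.
  have Hr' : enum_rank v = enum_rank u by apply: val_inj.
  by rewrite (enum_rank_inj Hr') H0.
have HB : \sum_u \sum_(v | enum_rank v < enum_rank u) dist e u v =
          \sum_u \sum_(v | enum_rank u < enum_rank v) dist e u v.
  under eq_bigr do rewrite big_mkcond.
  rewrite exchange_big.
  change (\sum_j \sum_i (if enum_rank j < enum_rank i then dist e i j else 0) = \sum_u \sum_(v | enum_rank u < enum_rank v) dist e u v).
  apply: (@eq_bigr nat 0 addn) => u _.
  rewrite [RHS]big_mkcond; apply: (@eq_bigr nat 0 addn) => v _; by case: ifP => // _; rewrite Hs.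
rewrite (eq_bigr _ (fun u _ => Hu u)) big_split HB mul2n -addnn.
by [].
Qed.

Lemma Fe_cut_le c t e j a K :
  Fe c t e j a K (t K.+1) <= Fe c t e j a K.+1 (c K.+1) + e /\
  Fe c t e j a K.+1 (c K.+1) <= Fe c t e j a K (t K.+1) + e.
Proof.
case: (leqP j K) => H.
  by rewrite (cutF1 _ _ _ _ H); split; lia.
by rewrite (cutF2 _ _ _ _ H); split; lia.
Qed.

Lemma Fe1_zero c t j a k b : a < 6 -> b < 6 ->
  (Fe c t 1 j a k b == 0) = (k == j) && (b == a).
Proof.
move=> Ha Hb. rewrite /Fe. case: (j =P k) => [->|Hn].
  by have [-> _ _] := hd_fin Ha Ha Hb; rewrite eqxx eq_sym.
have -> : (k == j) = false by apply/eqP => E; apply: Hn.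
case: ltnP => H; lia.
Qed.

Lemma dist_pp n c t (x y : pvert n) : dist (pp_edge c t) x y = Fe c t 1 x.1 x.2 y.1 y.2.
Proof.
case: x => [[j Hj] [a Ha]].
apply: (@dist_char _ (pp_edge c t) (Ordinal Hj, Ordinal Ha) (fun v : pvert n => Fe c t 1 j a v.1 v.2)).
- move=> [k b] /=. rewrite Fe1_zero //. 
- move=> [k b] [k' b'] /or3P [H|H|H] /=.
  + move/andP: H => [/eqP /= Hk Hadj]. rewrite -Hk. exact: Fe_lip.
  + move/and4P: H => [/= Hk /eqP /= Hk' /eqP /= Hb /eqP /= Hb'].
    rewrite Hk' Hb Hb'. move: Hk; case: k {Hk' Hb Hb'} => [[|K] HK] //= _.
    have [H1 _] := Fe_cut_le c t 1 j a K. lia.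
  + move/and4P: H => [/= Hk /eqP /= Hk' /eqP /= Hb /eqP /= Hb'].
    rewrite Hk' Hb Hb'. move: Hk; case: k' {Hk' Hb Hb'} => [[|K] HK] //= _.
    have [_ H1] := Fe_cut_le c t 1 j a K. lia.
- move=> [[k Hk] [b Hb]] /= Hpos.
  case: (j =P k) => [Hjk|Hjk].
  + subst k. move: Hpos; rewrite /Fe eqxx => Hpos.
    have [b' Hb' /andP[Hadj /eqP Hv]] := hd_step Ha Hb Hpos.
    exists (Ordinal Hk, Ordinal Hb'); last by rewrite /= /Fe eqxx.
    by apply/or3P; apply: Or31; rewrite /hex_edge /= eqxx.
  + have Hjk' : (j == k) = false by apply/eqP.
    case: (ltnP j k) => Hlt.
    * rewrite /Fe Hjk' Hlt in Hpos. case: (posnP (hd (c k) b)) => Hh.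
        have /eqP Hcb : nat_of_ord (c k) == b by have [<- _ _] := hd_fin Ha (ltn_ord (c k)) Hb; rewrite Hh.
        move: Hk Hlt Hcb {Hpos Hh}; case: k {Hjk Hjk'} => [|K] HK Hlt Hcb; first by rewrite ltn0 in Hlt.
        exists (pred_ord (Ordinal HK), t K.+1).
          apply/or3P; apply: Or33; rewrite /cut_edge /= !eqxx andbT /=.
          by apply/eqP; apply: val_inj; rewrite /= Hcb.
        have HjK : j <= K by [].
        by rewrite /= -Hcb (cutF1 c t 1 a HjK) addn1.
      have [b' Hb' /andP[Hadj /eqP Hv]] := hd_step (ltn_ord (c k)) Hb Hh.
      exists (Ordinal Hk, Ordinal Hb').
        by apply/or3P; apply: Or31; rewrite /hex_edge /= eqxx.
      rewrite /= /Fe Hjk' Hlt -Hv. lia.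
    * rewrite /Fe Hjk' (ltnNge j k) Hlt /= in Hpos.
      have Hkj : k < j by rewrite ltn_neqAle Hlt andbT eq_sym Hjk'.
      case: (posnP (hd b (t k.+1))) => Hh.
        have /eqP Hcb : b == nat_of_ord (t k.+1) by have [<- _ _] := hd_fin Ha Hb (ltn_ord (t k.+1)); rewrite Hh.
        have Hk1 : k.+1 < n by apply: leq_ltn_trans Hkj Hj.
        exists (Ordinal Hk1, c k.+1).
          apply/or3P; apply: Or32; rewrite /cut_edge /= !eqxx /=.
          by apply/eqP; apply: val_inj; rewrite /= Hcb.
        rewrite /= Hcb (cutF2 c t 1 a Hkj). lia.
      rewrite hd_sym in Hh.
      have [b' Hb' /andP[Hadj /eqP Hv]] := hd_step (ltn_ord (t k.+1)) Hb Hh.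
      exists (Ordinal Hk, Ordinal Hb').
        by apply/or3P; apply: Or31; rewrite /hex_edge /= eqxx.
      rewrite /= /Fe Hjk' (ltnNge j k) Hlt /= (hd_sym b') (hd_sym b) -Hv. lia.
- move=> [k b] /=. rewrite /pvert card_prod !card_ord.
  have Hn : 0 < n by apply: leq_ltn_trans Hj.
  have := Fe_bound c t 1 Hj (ltn_ord k) Ha (ltn_ord b). lia.
Qed.

Lemma sum_sig n c (G : pvert n -> nat) :
  \sum_(x : sq_vert n c) G (val x) = \sum_(x | rep c x) G x.
Proof.
symmetry.
rewrite (reindex_omap (val : sq_vert n c -> pvert n) insub); last first.
  by move=> i Pi; rewrite insubT.
by apply: eq_bigl=> -[i iA]/=; rewrite insubT ?iA /= eqxx.
Qed.

Lemma sum_pv n (P : nat -> nat -> bool) (G : nat -> nat -> nat) :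
  \sum_(x : pvert n | P x.1 x.2) G x.1 x.2 = \sum_(0 <= j < n) \sum_(0 <= a < 6 | P j a) G j a.
Proof.
rewrite -(pair_big_dep xpredT (fun (j : 'I_n) (a : 'I_6) => P j a) (fun (j : 'I_n) (a : 'I_6) => G j a)) /=.
rewrite big_mkord; apply: eq_bigr => j _. by rewrite big_mkord.
Qed.

Lemma card_sq n c : #|{: {x : pvert n | rep c x}}| = if n is 0 then 0 else (5 * n).+1.
Proof.
have E1 : #|{: {x : pvert n | rep c x}}| = \sum_(x : sq_vert n c) 1 by rewrite sum1_card.
have E2 : \sum_(x : sq_vert n c) 1 = \sum_(x : pvert n | rep c x) 1 := @sum_sig n c (fun _ => 1).
rewrite E1 E2 {E1 E2}.
rewrite (@eq_bigl _ _ _ _ _ _ (fun x : pvert n => (nat_of_ord x.1 == 0) || (nat_of_ord x.2 != nat_of_ord (c x.1)))) //.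
rewrite (@sum_pv _ (fun j a => (j == 0) || (a != nat_of_ord (c j))) (fun _ _ => 1)).
case: n => [|n]; first by rewrite big_geq.
rewrite big_ltn // /=.
have -> : \sum_(0 <= a < 6 | true) 1 = 6 by rewrite unlock.
rewrite (@eq_big_nat _ _ _ 1 n.+1 _ (fun _ => 5)); last first.
  move=> j /andP[Hj _]. have [_ _ _ H5] := hd_sums (ltn_ord (c j)) (ltn_ord (c j)).
  rewrite -[RHS]H5. by apply: eq_bigl => a; rewrite (gtn_eqF Hj).
rewrite sum_nat_const_nat. lia.
Qed.

Lemma rep_rmap n c t (Hct : forall k, 2 <= k < n -> t k != c k.-1) (w : pvert n) :
  rep c (rmap c t w).
Proof.
rewrite /rmap; case: ifP => // _. case: w => [[k Hk] b]. rewrite /rep /=.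
case: k Hk => [|[|k]] Hk //=. by rewrite Hct.
Qed.

Lemma Fe0_rmap n c t j a (w : pvert n) :
  Fe c t 0 j a (rmap c t w).1 (rmap c t w).2 = Fe c t 0 j a w.1 w.2.
Proof.
rewrite /rmap; case: ifP => // /norP [Hk /negPn /eqP Hc].
case: w Hk Hc => [[[|K] HK] b] //= _ ->.
have [H1 H2] := Fe_cut_le c t 0 j a K. lia.
Qed.

Lemma Fe0_zero (c t : nat -> 'I_6) j a k b : a < 6 -> b < 6 ->
  (j == 0) || (a != nat_of_ord (c j)) -> (k == 0) || (b != nat_of_ord (c k)) ->
  (Fe c t 0 j a k b == 0) = (k == j) && (b == a).
Proof.
move=> Ha Hb Hra Hrb. rewrite /Fe. case: (j =P k) => [->|Hn].
  by have [-> _ _] := hd_fin Ha Ha Hb; rewrite eqxx eq_sym.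
have -> : (k == j) = false by apply/eqP => E; apply: Hn.
case: ltnP => H.
  have Hbc : (hd (c k) b == 0) = false.
    have [-> _ _] := hd_fin Ha (ltn_ord (c k)) Hb.
    move: Hrb; case: (k =P 0) => [E|_] /=; first by move: H; rewrite E.
    by rewrite eq_sym => /negbTE.
  move/negbT: Hbc; rewrite -lt0n => Hbc. lia.
have Hac : (hd (c j) a == 0) = false.
  have [-> _ _] := hd_fin Ha (ltn_ord (c j)) Ha.
  move: Hra; case: (j =P 0) => [E|_] /=.
    by exfalso; apply: Hn; move: H; rewrite E leqn0 => /eqP ->.
  by rewrite eq_sym => /negbTE.
move/negbT: Hac; rewrite -lt0n => Hac. lia.
Qed.

Lemma dist_sq n c t (Hct : forall k, 2 <= k < n -> t k != c k.-1) (x y : sq_vert n c) :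
  dist (@sq_edge n c t) x y = Fe c t 0 (val x).1 (val x).2 (val y).1 (val y).2.
Proof.
case: x => [[[j Hj] [a Ha]] Hx].
pose f := fun v : sq_vert n c => Fe c t 0 j a (val v).1 (val v).2.
have Hstep : forall (v : sq_vert n c) (w v0 : pvert n), hex_edge w v0 ->
    rmap c t v0 = val v -> (Fe c t 0 j a w.1 w.2).+1 = f v ->
    exists2 x : sq_vert n c, @sq_edge n c t x v & (f x).+1 = f v.
  move=> v w v0 Hh Hv0 Hf.
  exists (exist _ (rmap c t w) (rep_rmap Hct w)).
    by apply/existsP; exists w; apply/existsP; exists v0; rewrite Hh Hv0 !eqxx.
  by rewrite /f /= Fe0_rmap.
apply: (@dist_char _ (@sq_edge n c t) (exist _ (Ordinal Hj, Ordinal Ha) Hx) f).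
- move=> [[[k Hk] [b Hb]] Hv] /=. rewrite /f /= Fe0_zero //.
- move=> x0 y0 /existsP [w1 /existsP [w2 /and3P [Hh /eqP H1 /eqP H2]]].
  rewrite /f -H1 -H2 !Fe0_rmap.
  case: w1 w2 Hh {H1 H2} => [k1 b1] [k2 b2] /andP [/eqP /= Hk Hadj].
  rewrite -Hk. exact: Fe_lip.
- move=> [[[k Hk] [b Hb]] Hv] Hpos. rewrite /f /= in Hpos.
  have Hrv : rmap c t (Ordinal Hk, Ordinal Hb) = (Ordinal Hk, Ordinal Hb) by rewrite /rmap Hv.
  case: (j =P k) => [Hjk|Hjk].
  + subst k. move: Hpos; rewrite /Fe eqxx => Hpos.
    have [b' Hb' /andP[Hadj /eqP Hvv]] := hd_step Ha Hb Hpos.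
    apply: (Hstep _ (Ordinal Hk, Ordinal Hb') (Ordinal Hk, Ordinal Hb)) => //.
      by rewrite /hex_edge /= eqxx.
    by rewrite /f /= /Fe !eqxx.
  + have Hjk' : (j == k) = false by apply/eqP.
    case: (ltnP j k) => Hlt.
    * have Hh : 0 < hd (c k) b.
        rewrite lt0n; have [-> _ _] := hd_fin Ha (ltn_ord (c k)) Hb.
        move: Hv; rewrite /rep /=; case: (k =P 0) => [E|_] /=; first by move: Hlt; rewrite E.
        by rewrite eq_sym.
      have [b' Hb' /andP[Hadj /eqP Hvv]] := hd_step (ltn_ord (c k)) Hb Hh.
      apply: (Hstep _ (Ordinal Hk, Ordinal Hb') (Ordinal Hk, Ordinal Hb)) => //.
        by rewrite /hex_edge /= eqxx.
      rewrite /f /= /Fe Hjk' Hlt -Hvv. lia.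
    * have Hkj : k < j by rewrite ltn_neqAle Hlt andbT eq_sym Hjk'.
      case: (posnP (hd b (t k.+1))) => Hh.
        have /eqP Hcb : b == nat_of_ord (t k.+1) by have [<- _ _] := hd_fin Ha Hb (ltn_ord (t k.+1)); rewrite Hh.
        have Hk1 : k.+1 < n by apply: leq_ltn_trans Hkj Hj.
        have Hrv0 : rmap c t (Ordinal Hk1, c k.+1) = (Ordinal Hk, Ordinal Hb).
          rewrite /rmap /rep /= eqxx /=. congr pair; apply: val_inj => //=.
        have HF : Fe c t 0 j a k b = Fe c t 0 j a k.+1 (c k.+1) by rewrite Hcb (cutF2 c t 0 a Hkj) addn0.
        case: (j =P k.+1) => [Ej|Ej].
          subst j. move: Hpos; rewrite HF /Fe eqxx => Hpos.
          have [b' Hb' /andP[Hadj /eqP Hvv]] := hd_step Ha (ltn_ord (c k.+1)) Hpos.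
          apply: (Hstep _ (Ordinal Hk1, Ordinal Hb') (Ordinal Hk1, c k.+1)) => //.
            by rewrite /hex_edge /= eqxx.
          by rewrite /f /= HF /Fe eqxx.
        have Hk1j : k.+1 < j by rewrite ltn_neqAle Hkj andbT; apply/eqP => E; apply: Ej.
        have Hct' : t k.+2 != c k.+1 by apply: Hct; rewrite /= (leq_ltn_trans Hk1j Hj).
        have Hh2 : 0 < hd (t k.+2) (c k.+1).
          rewrite lt0n; have [-> _ _] := hd_fin Ha (ltn_ord (t k.+2)) (ltn_ord (c k.+1)). exact: Hct'.
        have [b' Hb' /andP[Hadj /eqP Hvv]] := hd_step (ltn_ord (t k.+2)) (ltn_ord (c k.+1)) Hh2.
        apply: (Hstep _ (Ordinal Hk1, Ordinal Hb') (Ordinal Hk1, c k.+1)) => //.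
          by rewrite /hex_edge /= eqxx.
        rewrite /f /= HF /Fe.
        rewrite (gtn_eqF Hk1j) (ltnNge j k.+1) (ltnW Hk1j) /=.
        rewrite (hd_sym b') (hd_sym (c k.+1)) -Hvv. lia.
      rewrite hd_sym in Hh.
      have [b' Hb' /andP[Hadj /eqP Hvv]] := hd_step (ltn_ord (t k.+1)) Hb Hh.
      apply: (Hstep _ (Ordinal Hk, Ordinal Hb') (Ordinal Hk, Ordinal Hb)) => //.
        by rewrite /hex_edge /= eqxx.
      rewrite /f /= /Fe Hjk' (ltnNge j k) Hlt /= (hd_sym b') (hd_sym b) -Hvv. lia.
- move=> v. rewrite card_sq /f.
  have Hn : 0 < n := leq_ltn_trans (leq0n j) Hj.
  have -> : (if n is 0 then 0 else (5 * n).+1) = (5 * n).+1 by rewrite -(prednK Hn).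
  have := Fe_bound c t 0 Hj (ltn_ord (val v).1) Ha (ltn_ord (val v).2). rewrite -subn1 addn0 => H; apply: (leq_ltn_trans H); lia.
Qed.
Lemma sum_constr (P : pred nat) x : \sum_(0 <= a < 6 | P a) x = (\sum_(0 <= a < 6 | P a) 1) * x.
Proof. by rewrite big_distrl /=; apply: eq_bigr => a _; rewrite mul1n. Qed.

Lemma sum_sep (P Q : pred nat) (f g : nat -> nat) K :
  \sum_(0 <= a < 6 | P a) \sum_(0 <= b < 6 | Q b) (f a + K + g b) =
  (\sum_(0 <= b < 6 | Q b) 1) * (\sum_(0 <= a < 6 | P a) f a)
  + (\sum_(0 <= a < 6 | P a) 1) * (\sum_(0 <= b < 6 | Q b) 1) * K
  + (\sum_(0 <= a < 6 | P a) 1) * (\sum_(0 <= b < 6 | Q b) g b).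
Proof.
have E : forall a, \sum_(0 <= b < 6 | Q b) (f a + K + g b) =
   (\sum_(0 <= b < 6 | Q b) 1) * f a + (\sum_(0 <= b < 6 | Q b) 1) * K + \sum_(0 <= b < 6 | Q b) g b.
  move=> a. rewrite big_split /= (sum_constr Q (f a + K)) mulnDr //.
rewrite (eq_bigr _ (fun a _ => E a)) !big_split /=.
rewrite (sum_constr P (_ * K)) (sum_constr P (\sum_(0 <= b < 6 | Q b) g b)) -big_distrr /=.
lia.
Qed.

Definition repn (c : nat -> 'I_6) j a := (j == 0) || (a != nat_of_ord (c j)).
Definition S1 c t j k := \sum_(0 <= a < 6) \sum_(0 <= b < 6) Fe c t 1 j a k b.
Definition S0 c t j k := \sum_(0 <= a < 6 | repn c j a) \sum_(0 <= b < 6 | repn c k b) Fe c t 0 j a k b.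

Lemma sum6_1 : \sum_(0 <= b < 6 | xpredT b) 1 = 6.
Proof. by rewrite unlock. Qed.

Lemma sum_hd_r x : x < 6 -> \sum_(0 <= b < 6 | xpredT b) hd x b = 9.
Proof.
move=> Hx; have [<- _ _ _] := hd_sums Hx Hx.
by apply: eq_bigr => b _; rewrite hd_sym.
Qed.

Lemma sum_hd_l x : x < 6 -> \sum_(0 <= b < 6 | xpredT b) hd b x = 9.
Proof. by move=> Hx; have [<- _ _ _] := hd_sums Hx Hx. Qed.

Lemma sum_hd_ne x : x < 6 -> \sum_(0 <= b < 6 | b != x) hd x b = 9.
Proof.
move=> Hx; have [_ H _ _] := hd_sums Hx Hx. rewrite hd_aa addn0 in H.
by rewrite -[RHS]H; apply: eq_bigr => b _; rewrite hd_sym.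
Qed.

Lemma S1_diag c t j : S1 c t j j = 54.
Proof.
rewrite /S1 -hd_sum54; apply: eq_bigr => a _; apply: eq_bigr => b _.
by rewrite /Fe eqxx.
Qed.

Lemma S1_lt c t j k : j < k -> S1 c t j k = 108 + 36 * (Lsum c t j k + (k - j)).
Proof.
move=> H. rewrite /S1.
transitivity (\sum_(0 <= a < 6 | xpredT a) \sum_(0 <= b < 6 | xpredT b)
   ((fun a => hd a (t j.+1)) a + (Lsum c t j k + (k - j)) + (fun b => hd (c k) b) b)).
  apply: eq_bigr => a _; apply: eq_bigr => b _. rewrite /Fe (ltn_eqF H) H /=. lia.
rewrite sum_sep sum6_1 sum_hd_l // sum_hd_r //. lia.
Qed.

Lemma S0_diag0 c t : S0 c t 0 0 = 54.
Proof.
rewrite /S0 /repn /= -hd_sum54; apply: eq_bigr => a _; apply: eq_bigr => b _.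
by rewrite /Fe eqxx.
Qed.

Lemma S0_diag c t j : 0 < j -> S0 c t j j = 36.
Proof.
move=> Hj. have [_ _ <- _] := hd_sums (ltn_ord (c j)) (ltn_ord (c j)).
rewrite /S0 /repn (gtn_eqF Hj) /=.
apply: eq_bigr => a _; apply: eq_bigr => b _. by rewrite /Fe eqxx.
Qed.

Lemma S0_0k c t k : 0 < k -> S0 c t 0 k = 99 + 30 * Lsum c t 0 k.
Proof.
move=> Hk. rewrite /S0.
transitivity (\sum_(0 <= a < 6 | xpredT a) \sum_(0 <= b < 6 | b != nat_of_ord (c k))
   ((fun a => hd a (t 1)) a + Lsum c t 0 k + (fun b => hd (c k) b) b)).
  apply: eq_bigr => a _. rewrite /repn (gtn_eqF Hk) /=.
  apply: eq_bigr => b _. rewrite /Fe (ltn_eqF Hk) Hk /=. lia.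
have [_ _ _ H5] := hd_sums (ltn_ord (c k)) (ltn_ord (c k)).
rewrite sum_sep sum6_1 sum_hd_l // sum_hd_ne // H5. lia.
Qed.

Lemma S0_jk c t j k : 0 < j -> j < k -> S0 c t j k + 5 * ell c t j = 90 + 25 * Lsum c t j k.
Proof.
move=> Hj Hk. have Hk0 : 0 < k by apply: leq_ltn_trans Hk.
rewrite /S0.
transitivity (\sum_(0 <= a < 6 | a != nat_of_ord (c j)) \sum_(0 <= b < 6 | b != nat_of_ord (c k))
   ((fun a => hd a (t j.+1)) a + Lsum c t j k + (fun b => hd (c k) b) b) + 5 * ell c t j).
  apply: (f_equal2 addn) => //.
  rewrite /repn (gtn_eqF Hj) (gtn_eqF Hk0) /=.
  apply: eq_bigr => a _.
  apply: eq_bigr => b _. rewrite /Fe (ltn_eqF Hk) Hk /=. lia.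
have [_ _ _ H5] := hd_sums (ltn_ord (c k)) (ltn_ord (c k)).
have [_ H9 _ H5'] := hd_sums (ltn_ord (c j)) (ltn_ord (t j.+1)).
rewrite sum_sep sum_hd_ne // H5 H5' /ell. lia.
Qed.

Lemma sq_sym (S : nat -> nat -> nat) n : (forall j k, S j k = S k j) ->
  \sum_(0 <= j < n) \sum_(0 <= k < n) S j k =
  \sum_(0 <= j < n) S j j + 2 * \sum_(0 <= k < n) \sum_(0 <= j < k) S j k.
Proof.
move=> Hs; elim: n => [|n IH]; first by rewrite !big_geq.
have E1 : \sum_(0 <= j < n.+1) \sum_(0 <= k < n.+1) S j k =
   \sum_(0 <= j < n) \sum_(0 <= k < n) S j k + \sum_(0 <= j < n) S j n
   + (\sum_(0 <= k < n) S n k + S n n).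
  rewrite big_nat_recr //= big_nat_recr //=.
  rewrite (eq_bigr (fun j => \sum_(0 <= k < n) S j k + S j n)); last by move=> j _; rewrite big_nat_recr.
  by rewrite big_split.
have E2 : \sum_(0 <= k < n) S n k = \sum_(0 <= j < n) S j n by apply: eq_bigr => j _; rewrite Hs.
rewrite E1 IH E2 [\sum_(0 <= j < n.+1) S j j]big_nat_recr //= [\sum_(0 <= k < n.+1) _]big_nat_recr //=.
lia.
Qed.

Lemma W1_eq n c t : 2 * wiener (@pp_edge n c t) = \sum_(0 <= j < n) \sum_(0 <= k < n) S1 c t j k.
Proof.
rewrite wiener2; last first.
- by move=> u; rewrite dist_pp /Fe eqxx hd_aa.
- by move=> u v; rewrite !dist_pp Fe_sym.
rewrite (eq_bigr (fun x : pvert n => \sum_(0 <= k < n) \sum_(0 <= b < 6) Fe c t 1 x.1 x.2 k b)); last first.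
  move=> x _. rewrite -(@sum_pv n (fun _ _ => true) (fun k b => Fe c t 1 x.1 x.2 k b)).
  by apply: eq_bigr => y _; rewrite dist_pp.
rewrite (@sum_pv n (fun _ _ => true) (fun j a => \sum_(0 <= k < n) \sum_(0 <= b < 6) Fe c t 1 j a k b)).
apply: eq_bigr => j _. rewrite /S1 exchange_big //.
Qed.

Lemma W0_eq n c t (Hct : forall k, 2 <= k < n -> t k != c k.-1) :
  2 * wiener (@sq_edge n c t) = \sum_(0 <= j < n) \sum_(0 <= k < n) S0 c t j k.
Proof.
rewrite wiener2; last first.
- by move=> u; rewrite dist_sq // /Fe eqxx hd_aa.
- by move=> u v; rewrite !dist_sq // Fe_sym.
have Hrep : forall y : pvert n, rep c y = repn c y.1 y.2 by [].
rewrite (eq_bigr (fun x : sq_vert n c => \sum_(0 <= k < n) \sum_(0 <= b < 6 | repn c k b) Fe c t 0 (val x).1 (val x).2 k b)); last first.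
  move=> x _. rewrite -(@sum_pv n (repn c) (fun k b => Fe c t 0 (val x).1 (val x).2 k b)).
  transitivity (\sum_(y : sq_vert n c) (fun y : pvert n => Fe c t 0 (val x).1 (val x).2 y.1 y.2) (val y)).
    by apply: eq_bigr => y _; rewrite dist_sq.
  rewrite (@sum_sig n c (fun y : pvert n => Fe c t 0 (val x).1 (val x).2 y.1 y.2)). by apply: eq_bigl.
transitivity (\sum_(x : sq_vert n c) (fun x : pvert n => \sum_(0 <= k < n) \sum_(0 <= b < 6 | repn c k b) Fe c t 0 x.1 x.2 k b) (val x)) => //.
rewrite (@sum_sig n c (fun x : pvert n => \sum_(0 <= k < n) \sum_(0 <= b < 6 | repn c k b) Fe c t 0 x.1 x.2 k b)).
rewrite (eq_bigl (fun x : pvert n => repn c x.1 x.2)) //.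
rewrite (@sum_pv n (repn c) (fun j a => \sum_(0 <= k < n) \sum_(0 <= b < 6 | repn c k b) Fe c t 0 j a k b)).
apply: eq_bigr => j _. rewrite /S0 exchange_big //.
Qed.

Lemma tri k : 2 * \sum_(1 <= j < k) (k - j) = k * k.-1.
Proof.
elim: k => [|k IH]; first by rewrite big_geq.
case: k IH => [|k] IH; first by rewrite big_geq.
rewrite big_nat_recr //= subSnn.
rewrite (@eq_big_nat _ _ _ 1 k.+1 _ (fun j => (k.+1 - j) + 1)); last first.
  move=> j /andP[_ Hj]. lia.
rewrite big_split /= sum_nat_const_nat. lia.
Qed.

Definition Xs c t k := \sum_(0 <= j < k) S1 c t j k.
Definition Ys c t k := \sum_(0 <= j < k) S0 c t j k.

Lemma XY c t k : 0 < k ->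
  25 * Xs c t k + 540 * (k - 1) + 864 = 36 * Ys c t k + 900 * \sum_(1 <= j < k) (k - j) + 900 * k.
Proof.
move=> Hk. rewrite /Xs /Ys big_ltn // [\sum_(0 <= j < k) S0 c t j k]big_ltn //.
have E0 : 25 * S1 c t 0 k + 864 + 180 * Lsum c t 0 k = 36 * S0 c t 0 k + 900 * k.
  rewrite S1_lt // S0_0k //. lia.
have E : \sum_(1 <= j < k) (25 * S1 c t j k + 540) =
         \sum_(1 <= j < k) (36 * S0 c t j k + 900 * (k - j) + 180 * ell c t j).
  apply: eq_big_nat => j /andP[Hj1 Hjk].
  have := S0_jk c t Hj1 Hjk. rewrite S1_lt //. lia.
have sumM : forall (m : nat) (F : nat -> nat), \sum_(1 <= j < k) (m * F j) = m * \sum_(1 <= j < k) F j.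
  by move=> m F; rewrite big_distrr.
have L1 : \sum_(1 <= j < k) (25 * S1 c t j k + 540) = 25 * \sum_(1 <= j < k) S1 c t j k + 540 * (k - 1).
  by rewrite big_split /= sumM sum_nat_const_nat (mulnC (k - 1)).
have L2 : \sum_(1 <= j < k) (36 * S0 c t j k + 900 * (k - j) + 180 * ell c t j) =
  36 * \sum_(1 <= j < k) S0 c t j k + 900 * \sum_(1 <= j < k) (k - j) + 180 * \sum_(1 <= j < k) ell c t j.
  by rewrite big_split /= big_split /= !sumM.
rewrite L1 L2 in E.
have EL : Lsum c t 0 k = \sum_(1 <= j < k) ell c t j by [].
lia.
Qed.

Lemma AB c t n : 0 < n ->
  25 * \sum_(0 <= k < n) Xs c t k + 270 * (n * n) + 204 * n =
  36 * \sum_(0 <= k < n) Ys c t k + 150 * (n * n * n) + 324.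
Proof.
elim: n => [//|n IH] _. case: n IH => [|n] IH.
  by rewrite !big_nat1 /Xs /Ys !big_geq.
rewrite big_nat_recr //= [\sum_(0 <= k < n.+2) Ys c t k]big_nat_recr //=.
have H1 := IH (ltn0Sn n).
have H2 := XY c t (ltn0Sn n).
have H3 := tri n.+1.
rewrite /= in H3. rewrite subn1 /= in H2.
lia.
Qed.

Lemma S1_sym c t j k : S1 c t j k = S1 c t k j.
Proof.
rewrite /S1 exchange_big /=; apply: eq_bigr => a _; apply: eq_bigr => b _.
by rewrite Fe_sym.
Qed.

Lemma S0_sym c t j k : S0 c t j k = S0 c t k j.
Proof.
rewrite /S0 exchange_big /=; apply: eq_bigr => a _; apply: eq_bigr => b _.
by rewrite Fe_sym.
Qed.

Lemma nat_main n c t (Hct : forall k, 2 <= k < n -> t k != c k.-1) :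
  25 * wiener (@pp_edge n c t) + 270 * (n * n) + 177 * n =
  36 * wiener (@sq_edge n c t) + 150 * (n * n * n).
Proof.
have E1 := W1_eq n c t.
have E0 := W0_eq Hct.
rewrite (sq_sym _ (S1_sym c t)) in E1.
rewrite (sq_sym _ (S0_sym c t)) in E0.
case: n Hct E1 E0 => [|n] Hct E1 E0.
  rewrite !big_geq // in E1 E0. lia.
have D1 : \sum_(0 <= j < n.+1) S1 c t j j = 54 * n.+1.
  rewrite (eq_bigr (fun _ => 54)); last by move=> j _; rewrite S1_diag.
  by rewrite sum_nat_const_nat subn0 mulnC.
have D0 : \sum_(0 <= j < n.+1) S0 c t j j = 54 + 36 * n.
  rewrite big_ltn // S0_diag0.
  rewrite (@eq_big_nat _ _ _ 1 n.+1 _ (fun _ => 36)); last by move=> j /andP[Hj _]; rewrite S0_diag.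
  by rewrite sum_nat_const_nat subn1 mulnC.
have HAB := AB c t (ltn0Sn n).
rewrite D1 in E1. rewrite D0 in E0.
have EX : \sum_(0 <= k < n.+1) \sum_(0 <= j < k) S1 c t j k = \sum_(0 <= k < n.+1) Xs c t k by [].
have EY : \sum_(0 <= k < n.+1) \sum_(0 <= j < k) S0 c t j k = \sum_(0 <= k < n.+1) Ys c t k by [].
rewrite EX in E1. rewrite EY in E0.
lia.
Qed.

Unset Implicit Arguments.

Theorem theorem4p1 (n : nat) (c t : nat -> 'I_6)
  (Hct : forall k, 2 <= k < n -> t k != c k.-1) :
  ((25 * wiener (@pp_edge n c t))%N%:Z
   = (36 * wiener (@sq_edge n c t))%N%:Z
     + 150 * (n%:Z) ^+ 3 - 270 * (n%:Z) ^+ 2 - 177 * n%:Z)%R.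
Proof.
have H := nat_main Hct.
rewrite !exprS expr0 !mulr1.
lia.
Qed.
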